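(* Let $E:[0,\infty)\times\mathbb{R}^2\to\mathbb{R}^2$ and $b:[0,\infty)\times\mathbb{R}^2\to\mathbb{R}$ be continuous with $b$ nowhere vanishing, $B=b\,e_3$. Let $\alpha=0.24169426078821$, $\beta=\alpha/4$, $\eta=0.12915286960590$, $\gamma=1/2-\alpha-\beta-\eta$. Fix $\Delta t>0$, $T>0$, $t^n=n\Delta t$, $t^{n+1/2}=t^n+\Delta t/2$, $N_T=\lfloor T/\Delta t\rfloor$. For each $\varepsilon>0$ let $(x^n_\varepsilon,v^n_\varepsilon)_{0\le n\le N_T}$ be generated (dropping the index $\varepsilon$ inside stages) by: given $(x^n,v^n)$, find stages $(x^{(i)},v^{(i)})$, $i=1,\dots,4$, with $$x^{(1)}=x^n+\tfrac{\alpha\Delta t}{\varepsilon}v^{(1)},\ v^{(1)}=v^n+\tfrac{\alpha\Delta t}{\varepsilon}F^{(1)},\ F^{(1)}=\tfrac{v^{(1)}}{\varepsilon}\wedge B(t^n,x^n)+E(t^n,x^n);$$ $$x^{(2)}=x^n-\tfrac{\alpha\Delta t}{\varepsilon}v^{(1)}+\tfrac{\alpha\Delta t}{\varepsilon}v^{(2)},\ v^{(2)}=v^n-\tfrac{\alpha\Delta t}{\varepsilon}F^{(1)}+\tfrac{\alpha\Delta t}{\varepsilon}F^{(2)},\ F^{(2)}=\tfrac{v^{(2)}}{\varepsilon}\wedge B(t^n,x^n)+E(t^n,x^n);$$ $$x^{(3)}=x^n+\tfrac{(1-\alpha)\Delta t}{\varepsilon}v^{(2)}+\tfrac{\alpha\Delta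 t}{\varepsilon}v^{(3)},\ v^{(3)}=v^n+\tfrac{(1-\alpha)\Delta t}{\varepsilon}F^{(2)}+\tfrac{\alpha\Delta t}{\varepsilon}F^{(3)},$$ $$F^{(3)}=\tfrac{v^{(3)}}{\varepsilon}\wedge B(t^{n+1},\bar x^{(2)})+E(t^{n+1},\bar x^{(2)}),\quad \bar x^{(2)}=x^n+\tfrac{\Delta t}{\varepsilon}v^{(2)};$$ $$x^{(4)}=x^n+\tfrac{\Delta t}{\varepsilon}\big(\beta v^{(1)}+\eta v^{(2)}+\gamma v^{(3)}+\alpha v^{(4)}\big),\ v^{(4)}=v^n+\tfrac{\Delta t}{\varepsilon}\big(\beta F^{(1)}+\eta F^{(2)}+\gamma F^{(3)}+\alpha F^{(4)}\big),$$ $$F^{(4)}=\tfrac{v^{(4)}}{\varepsilon}\wedge B(t^{n+1/2},\bar x^{(3)})+E(t^{n+1/2},\bar x^{(3)}),\quad \bar x^{(3)}=x^n+\tfrac{\Delta t}{4\varepsilon}(v^{(2)}+v^{(3)});$$ and finally $x^{n+1}=x^n+\frac{\Delta t}{6\varepsilon}(v^{(2)}+v^{(3)}+4v^{(4)})$, $v^{n+1}=v^n+\frac{\Delta t}{6\varepsilon}(F^{(2)}+F^{(3)}+4F^{(4)})$. Assume that for every $1\le n\le N_T$ the family $(x^n_\varepsilon,\varepsilon v^n_\varepsilon)_{\varepsilon>0}$ is bounded uniformly in $\varepsilon$ and that $(x^0_\varepsilon,\varepsilon v^0_\varepsilon)\to(y^0,0)$ as $\varepsilon\to0$. Then for every $0\le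 n\le N_T$, $x^n_\varepsilon\to y^n$ as $\varepsilon\to0$, where $(y^n)$ starts from $y^0$ and satisfies $$U^{(2)}=U(t^n,y^n),\quad y^{(2)}=y^n+\Delta t\,U^{(2)},\quad U^{(3)}=U(t^{n+1},y^{(2)}),$$ $$y^{(3)}=y^n+\tfrac{\Delta t}{4}(U^{(2)}+U^{(3)}),\quad U^{(4)}=U(t^{n+1/2},y^{(3)}),\quad y^{n+1}=y^n+\tfrac{\Delta t}{6}(U^{(2)}+U^{(3)}+4U^{(4)}).$$
   Context: Vectors of $\mathbb{R}^2$ are identified with vectors $(w_1,w_2,0)$ of $\mathbb{R}^3$, $e_3=(0,0,1)$, and $\wedge$ is the cross product; thus for $w\in\mathbb{R}^2$ and $B=b\,e_3$, $w\wedge B=b\,(w_2,-w_1)\in\mathbb{R}^2$. The guiding-center drift is $U(t,x)=\dfrac{E(t,x)\wedge B(t,x)}{\|B(t,x)\|^2}$. *)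

(* Defs.v *)
From Stdlib Require Import Reals Lra Lia ZArith.
Open Scope R_scope.

(* Vectors of R^2, identified with (w1,w2,0) in R^3. *)
Definition vec := (R * R)%type.
Definition vadd (u w : vec) : vec := (fst u + fst w, snd u + snd w).
Definition vsub (u w : vec) : vec := (fst u - fst w, snd u - snd w).
Definition vscal (c : R) (u : vec) : vec := (c * fst u, c * snd u).
Definition vnorm (u : vec) : R := sqrt (fst u * fst u + snd u * snd u).

(* w /\ (b e3) = b (w2, -w1) *)
Definition wedge_e3 (w : vec) (b : R) : vec := (b * snd w, - (b * fst w)).
Definition normB2 (b : R) : R := b * b.

Definition drift (E : R -> vec -> vec) (b : R -> vec -> R) (t : R) (x : vec) : vec :=
  vscal (/ normB2 (b t x)) (wedge_e3 (E t x) (b t x)).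

Definition cont_vec (E : R -> vec -> vec) : Prop :=
  forall t x, 0 <= t -> forall d, 0 < d -> exists h, 0 < h /\
    forall s y, 0 <= s -> Rabs (s - t) < h -> vnorm (vsub y x) < h ->
      vnorm (vsub (E s y) (E t x)) < d.
Definition cont_scal (b : R -> vec -> R) : Prop :=
  forall t x, 0 <= t -> forall d, 0 < d -> exists h, 0 < h /\
    forall s y, 0 <= s -> Rabs (s - t) < h -> vnorm (vsub y x) < h ->
      Rabs (b s y - b t x) < d.

Definition lim_eps0 (f : R -> vec) (l : vec) : Prop :=
  forall d, 0 < d -> exists h, 0 < h /\
    forall eps, 0 < eps -> eps < h -> vnorm (vsub (f eps) l) < d.

Definition bounded_eps (f : R -> vec) : Prop :=
  exists M, forall eps, 0 < eps -> vnorm (f eps) <= M.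

Definition alpha : R := IZR 24169426078821%Z / 10 ^ 14.
Definition beta : R := alpha / 4.
Definition eta : R := IZR 12915286960590%Z / 10 ^ 14.
Definition gamma : R := 1 / 2 - alpha - beta - eta.

Definition NT (T dt : R) : nat := Z.to_nat (Int_part (T / dt)).

Definition scheme_step (E : R -> vec -> vec) (b : R -> vec -> R)
    (dt eps tn : R) (xn vn xn1 vn1 : vec) : Prop :=
  let tn1 := tn + dt in
  let tnh := tn + dt / 2 in
  let c := alpha * dt / eps in
  exists x1 v1 x2 v2 x3 v3 x4 v4 : vec,
    let F1 := vadd (wedge_e3 (vscal (/ eps) v1) (b tn xn)) (E tn xn) in
    let F2 := vadd (wedge_e3 (vscal (/ eps) v2) (b tn xn)) (E tn xn) in
    let xb2 := vadd xn (vscal (dt / eps) v2) in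
    let F3 := vadd (wedge_e3 (vscal (/ eps) v3) (b tn1 xb2)) (E tn1 xb2) in
    let xb3 := vadd xn (vscal (dt / (4 * eps)) (vadd v2 v3)) in
    let F4 := vadd (wedge_e3 (vscal (/ eps) v4) (b tnh xb3)) (E tnh xb3) in
    x1 = vadd xn (vscal c v1) /\
    v1 = vadd vn (vscal c F1) /\
    x2 = vadd (vsub xn (vscal c v1)) (vscal c v2) /\
    v2 = vadd (vsub vn (vscal c F1)) (vscal c F2) /\
    x3 = vadd (vadd xn (vscal ((1 - alpha) * dt / eps) v2)) (vscal c v3) /\
    v3 = vadd (vadd vn (vscal ((1 - alpha) * dt / eps) F2)) (vscal c F3) /\
    x4 = vadd xn (vscal (dt / eps)
           (vadd (vadd (vadd (vscal beta v1) (vscal eta v2)) (vscal gamma v3))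
                 (vscal alpha v4))) /\
    v4 = vadd vn (vscal (dt / eps)
           (vadd (vadd (vadd (vscal beta F1) (vscal eta F2)) (vscal gamma F3))
                 (vscal alpha F4))) /\
    xn1 = vadd xn (vscal (dt / (6 * eps)) (vadd (vadd v2 v3) (vscal 4 v4))) /\
    vn1 = vadd vn (vscal (dt / (6 * eps)) (vadd (vadd F2 F3) (vscal 4 F4))).

Definition limit_step (E : R -> vec -> vec) (b : R -> vec -> R)
    (dt tn : R) (yn : vec) : vec :=
  let U := drift E b in
  let U2 := U tn yn in
  let y2 := vadd yn (vscal dt U2) in
  let U3 := U (tn + dt) y2 in
  let y3 := vadd yn (vscal (dt / 4) (vadd U2 U3)) in
  let U4 := U (tn + dt / 2) y3 in
  vadd yn (vscal (dt / 6) (vadd (vadd U2 U3) (vscal 4 U4))).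

Fixpoint limit_seq (E : R -> vec -> vec) (b : R -> vec -> R)
    (dt : R) (y0 : vec) (n : nat) : vec :=
  match n with
  | O => y0
  | S m => limit_step E b dt (INR m * dt) (limit_seq E b dt y0 m)
  end.

(* Main.v *)
Require Import Defs.
From Stdlib Require Import Reals Lra Lia.
From Stdlib Require Import IndefiniteDescription.
Open Scope R_scope.

Opaque alpha beta eta gamma.

Definition L (f : R -> R) (l : R) : Prop := limit1_in f (fun x => 0 < x) l 0.

Lemma L_def f l : L f l -> forall d, 0 < d -> exists h, 0 < h /\ forall x, 0 < x -> x < h -> Rabs (f x - l) < d.
Proof.
  intros H d Hd. destruct (H d Hd) as [h [Hh Hx]]. exists h; split; auto.
  intros x H1 H2. apply (Hx x). split; auto. simpl. unfold Rdist.
  rewrite Rminus_0_r, Rabs_right; lra.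
Qed.

Lemma L_intro f l : (forall d, 0 < d -> exists h, 0 < h /\ forall x, 0 < x -> x < h -> Rabs (f x - l) < d) -> L f l.
Proof.
  intros H d Hd. destruct (H d Hd) as [h [Hh Hx]]. exists h; split; auto.
  intros x [H1 H2]. simpl in *. unfold Rdist in *.
  rewrite Rminus_0_r, Rabs_right in H2 by lra. apply Hx; auto.
Qed.

Lemma L_plus f g a b : L f a -> L g b -> L (fun x => f x + g x) (a + b).
Proof. apply limit_plus. Qed.
Lemma L_minus f g a b : L f a -> L g b -> L (fun x => f x - g x) (a - b).
Proof. apply limit_minus. Qed.
Lemma L_mult f g a b : L f a -> L g b -> L (fun x => f x * g x) (a * b).
Proof. apply limit_mul. Qed.
Lemma L_opp f a : L f a -> L (fun x => - f x) (- a).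
Proof. apply limit_Ropp. Qed.
Lemma L_inv f a : L f a -> a <> 0 -> L (fun x => / f x) (/ a).
Proof. apply limit_inv. Qed.
Lemma L_id : L (fun x => x) 0.
Proof. apply lim_x. Qed.
Lemma L_const k : L (fun _ => k) k.
Proof. apply (limit_free (fun _ => k) _ 0 0). Qed.
Lemma L_eq f a b : L f a -> a = b -> L f b.
Proof. intros; subst; auto. Qed.
Lemma L_ext f g a : (forall x, 0 < x -> g x = f x) -> L f a -> L g a.
Proof.
  intros He H. apply L_intro. intros d Hd. destruct (L_def _ _ H d Hd) as [h [Hh Hx]].
  exists h; split; auto. intros. rewrite He; auto.
Qed.

Ltac lim := first
  [ eassumption
  | apply L_id
  | eapply L_plus; [lim|lim]
  | eapply L_minus; [lim|lim]
  | eapply L_mult; [lim|lim]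
  | eapply L_opp; lim
  | eapply L_inv; [lim|]
  | apply L_const ].

Definition VL (f : R -> vec) (l : vec) : Prop :=
  L (fun x => fst (f x)) (fst l) /\ L (fun x => snd (f x)) (snd l).

Lemma abs_le_vnorm1 u : Rabs (fst u) <= vnorm u.
Proof.
  unfold vnorm. rewrite <- sqrt_Rsqr_abs. apply sqrt_le_1_alt.
  pose proof (Rle_0_sqr (snd u)); unfold Rsqr in *; lra.
Qed.
Lemma abs_le_vnorm2 u : Rabs (snd u) <= vnorm u.
Proof.
  unfold vnorm. rewrite <- sqrt_Rsqr_abs. apply sqrt_le_1_alt.
  pose proof (Rle_0_sqr (fst u)); unfold Rsqr in *; lra.
Qed.
Lemma vnorm_le_sum u : vnorm u <= Rabs (fst u) + Rabs (snd u).
Proof.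
  pose proof (Rabs_pos (fst u)); pose proof (Rabs_pos (snd u)).
  unfold vnorm. rewrite <- (sqrt_Rsqr (Rabs (fst u) + Rabs (snd u))) by lra.
  apply sqrt_le_1_alt. pose proof (Rsqr_abs (fst u)); pose proof (Rsqr_abs (snd u)).
  unfold Rsqr in *. nra.
Qed.

Lemma lim_to_VL f l : lim_eps0 f l -> VL f l.
Proof.
  intros H; split; apply L_intro; intros d Hd; destruct (H d Hd) as [h [Hh Hx]];
    exists h; split; auto; intros x H1 H2; specialize (Hx x H1 H2).
  - pose proof (abs_le_vnorm1 (vsub (f x) l)) as K.
    change (fst (vsub (f x) l)) with (fst (f x) - fst l) in K. lra.
  - pose proof (abs_le_vnorm2 (vsub (f x) l)) as K.
    change (snd (vsub (f x) l)) with (snd (f x) - snd l) in K. lra.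
Qed.

Lemma VL_to_lim f l : VL f l -> lim_eps0 f l.
Proof.
  intros [H1 H2] d Hd.
  destruct (L_def _ _ H1 (d/2)) as [h1 [Hh1 X1]]; [lra|].
  destruct (L_def _ _ H2 (d/2)) as [h2 [Hh2 X2]]; [lra|].
  exists (Rmin h1 h2); split; [apply Rmin_pos; auto|]. intros x Hx Hxh.
  pose proof (vnorm_le_sum (vsub (f x) l)) as K.
  change (fst (vsub (f x) l)) with (fst (f x) - fst l) in K.
  change (snd (vsub (f x) l)) with (snd (f x) - snd l) in K.
  pose proof (Rmin_l h1 h2); pose proof (Rmin_r h1 h2).
  specialize (X1 x Hx ltac:(lra)); specialize (X2 x Hx ltac:(lra)); lra.
Qed.

Lemma cont_VL E t X a : cont_vec E -> 0 <= t -> VL X a -> VL (fun x => E t (X x)) (E t a).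
Proof.
  intros HE Ht HX. apply lim_to_VL. intros d Hd.
  destruct (HE t a Ht d Hd) as [h [Hh Hc]].
  destruct (VL_to_lim _ _ HX h Hh) as [h' [Hh' Hx]]. exists h'; split; auto.
  intros x H1 H2. apply Hc; auto.
  replace (t - t) with 0 by ring. rewrite Rabs_R0; auto.
Qed.

Lemma cont_L b t X a : cont_scal b -> 0 <= t -> VL X a -> L (fun x => b t (X x)) (b t a).
Proof.
  intros HE Ht HX. apply L_intro. intros d Hd.
  destruct (HE t a Ht d Hd) as [h [Hh Hc]].
  destruct (VL_to_lim _ _ HX h Hh) as [h' [Hh' Hx]]. exists h'; split; auto.
  intros x H1 H2. apply Hc; auto.
  replace (t - t) with 0 by ring. rewrite Rabs_R0; auto.
Qed.

Lemma VL_add f g a b : VL f a -> VL g b -> VL (fun x => vadd (f x) (g x)) (vadd a b).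
Proof. intros [? ?] [? ?]; split; simpl; apply L_plus; auto. Qed.
Lemma VL_sub f g a b : VL f a -> VL g b -> VL (fun x => vsub (f x) (g x)) (vsub a b).
Proof. intros [? ?] [? ?]; split; simpl; apply L_minus; auto. Qed.
Lemma VL_scal k f a : VL f a -> VL (fun x => vscal k (f x)) (vscal k a).
Proof. intros [? ?]; split; simpl; apply L_mult; auto; apply L_const. Qed.
Lemma VL_eq f a b : VL f a -> a = b -> VL f b.
Proof. intros; subst; auto. Qed.
Lemma VL_ext f g a : (forall x, 0 < x -> g x = f x) -> VL f a -> VL g a.
Proof.
  intros He [H1 H2]; split; eapply L_ext; eauto; intros x Hx; simpl; rewrite He; auto.
Qed.

Definition F_ (u : vec) (bb : R) (e : vec) : vec := vadd (wedge_e3 u bb) e.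
Definition SE (x : R) (q : vec) (c bb : R) (e u : vec) : Prop :=
  x*x*fst u = fst q + c*(bb*snd u + fst e) /\ x*x*snd u = snd q + c*(-(bb*fst u) + snd e).

Lemma stage (q e : R -> vec) (bb : R -> R) (u : R -> vec) (c bs : R) (es : vec) :
  (forall x, 0 < x -> SE x (q x) c (bb x) (e x) (u x)) ->
  c <> 0 -> bs <> 0 -> VL q (0,0) -> VL e es -> L bb bs ->
  VL u (vscal (/ normB2 bs) (wedge_e3 es bs)) /\ VL (fun x => F_ (u x) (bb x) (e x)) (0,0).
Proof.
  intros HS Hc Hbs [Hq1 Hq2] [He1 He2] Hb.
  assert (HD : forall x, 0 < x -> x*x*(x*x) + c*c*(bb x*bb x) <> 0).
  { intros x Hx. pose proof (Rle_0_sqr (c * bb x)). unfold Rsqr in H.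
    assert (0 < x*x*(x*x)) by (apply Rmult_lt_0_compat; apply Rmult_lt_0_compat; lra). nra. }
  assert (HD0 : 0*0*(0*0) + c*c*(bs*bs) <> 0).
  { replace (0*0*(0*0) + c*c*(bs*bs)) with ((c*bs)*(c*bs)) by ring.
    apply Rmult_integral_contrapositive_currified; apply Rmult_integral_contrapositive_currified; auto. }
  assert (Kd : forall D N, D <> 0 -> D*(N*/D) = N) by (intros; field; auto).
  assert (Hu1 : L (fun x => fst (u x)) (/ (bs*bs) * (bs * snd es))).
  { apply L_ext with (f := fun x => (x*x*(fst (q x) + c*fst (e x)) + c*bb x*(snd (q x) + c*snd (e x))) * / (x*x*(x*x) + c*c*(bb x*bb x))).
    - intros x Hx. destruct (HS x Hx) as [A B].
      apply (Rmult_eq_reg_l (x*x*(x*x) + c*c*(bb x*bb x))); [|apply HD; auto].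
      rewrite Kd by (apply HD; auto).
      pose proof (f_equal (Rmult (x*x)) A). pose proof (f_equal (Rmult (c*bb x)) B). lra.
    - eapply L_eq; [lim|]. all: simpl; try field; auto. }
  assert (Hu2 : L (fun x => snd (u x)) (/ (bs*bs) * (- (bs * fst es)))).
  { apply L_ext with (f := fun x => (x*x*(snd (q x) + c*snd (e x)) - c*bb x*(fst (q x) + c*fst (e x))) * / (x*x*(x*x) + c*c*(bb x*bb x))).
    - intros x Hx. destruct (HS x Hx) as [A B].
      apply (Rmult_eq_reg_l (x*x*(x*x) + c*c*(bb x*bb x))); [|apply HD; auto].
      rewrite Kd by (apply HD; auto).
      pose proof (f_equal (Rmult (x*x)) B). pose proof (f_equal (Rmult (c*bb x)) A). lra.
    - eapply L_eq; [lim|]. all: simpl; try field; auto. }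
  split.
  - split; simpl; unfold normB2; auto.
  - unfold F_, vadd, wedge_e3; split; simpl; eapply L_eq; try lim; field; auto.
Qed.

Definition clean E b dt eps tn xn vn xn1 vn1 (u1 u2 u3 u4 : vec) : Prop :=
  let w := vscal eps vn in
  let b0 := b tn xn in let E0 := E tn xn in
  let xb2 := vadd xn (vscal dt u2) in
  let xb3 := vadd xn (vscal (dt/4) (vadd u2 u3)) in
  let b3 := b (tn+dt) xb2 in let E3 := E (tn+dt) xb2 in
  let b4 := b (tn+dt/2) xb3 in let E4 := E (tn+dt/2) xb3 in
  let F1 := F_ u1 b0 E0 in let F2 := F_ u2 b0 E0 in
  let F3 := F_ u3 b3 E3 in let F4 := F_ u4 b4 E4 in
  SE eps w (alpha*dt) b0 E0 u1 /\
  SE eps (vsub w (vscal (alpha*dt) F1)) (alpha*dt) b0 E0 u2 /\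
  SE eps (vadd w (vscal ((1-alpha)*dt) F2)) (alpha*dt) b3 E3 u3 /\
  SE eps (vadd w (vscal dt (vadd (vadd (vscal beta F1) (vscal eta F2)) (vscal gamma F3)))) (dt*alpha) b4 E4 u4 /\
  xn1 = vadd xn (vscal (dt/6) (vadd (vadd u2 u3) (vscal 4 u4))) /\
  vscal eps vn1 = vadd w (vscal (dt/6) (vadd (vadd F2 F3) (vscal 4 F4))).

Lemma clean_of_scheme E b dt eps tn xn vn xn1 vn1 : 0 < eps ->
  scheme_step E b dt eps tn xn vn xn1 vn1 ->
  exists u1 u2 u3 u4, clean E b dt eps tn xn vn xn1 vn1 u1 u2 u3 u4.
Proof.
  intros Heps H. unfold scheme_step in H. cbv zeta in H.
  destruct H as (x1 & v1 & x2 & v2 & x3 & v3 & x4 & v4 & H1 & H2 & H3 & H4 & H5 & H6 & H7 & H8 & H9 & H10).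
  exists (vscal (/eps) v1), (vscal (/eps) v2), (vscal (/eps) v3), (vscal (/eps) v4).
  assert (E2: vadd xn (vscal dt (vscal (/eps) v2)) = vadd xn (vscal (dt/eps) v2))
    by (unfold vadd, vscal; simpl; f_equal; field; lra).
  assert (E3: vadd xn (vscal (dt/4) (vadd (vscal (/eps) v2) (vscal (/eps) v3))) = vadd xn (vscal (dt/(4*eps)) (vadd v2 v3)))
    by (unfold vadd, vscal; simpl; f_equal; field; lra).
  unfold clean; cbv zeta. rewrite E2, E3. unfold F_, SE.
  pose proof (f_equal fst H2) as H2a; pose proof (f_equal snd H2) as H2b.
  pose proof (f_equal fst H4) as H4a; pose proof (f_equal snd H4) as H4b.
  pose proof (f_equal fst H6) as H6a; pose proof (f_equal snd H6) as H6b.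
  pose proof (f_equal fst H8) as H8a; pose proof (f_equal snd H8) as H8b.
  simpl in H2a, H2b, H4a, H4b, H6a, H6b, H8a, H8b.
  refine (conj _ (conj _ (conj _ (conj _ (conj _ _))))).
  - split; simpl; [rewrite H2a at 1 | rewrite H2b at 1]; field; lra.
  - split; simpl; [rewrite H4a at 1 | rewrite H4b at 1]; field; lra.
  - split; simpl; [rewrite H6a at 1 | rewrite H6b at 1]; field; lra.
  - split; simpl; [rewrite H8a at 1 | rewrite H8b at 1]; field; lra.
  - rewrite H9; unfold vadd, vscal; simpl; f_equal; field; lra.
  - rewrite H10; unfold vadd, vscal; simpl; f_equal; field; lra.
Qed.

Lemma alpha_pos : 0 < alpha.
Proof. Transparent alpha. unfold alpha. apply Rdiv_lt_0_compat; [apply (IZR_lt 0); lia | apply pow_lt; lra]. Qed.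
Opaque alpha.

Theorem proposition3p4
  (E : R -> vec -> vec) (b : R -> vec -> R)
  (HE : cont_vec E) (Hb : cont_scal b)
  (Hb0 : forall t x, 0 <= t -> b t x <> 0)
  (dt T : R) (Hdt : 0 < dt) (HT : 0 < T)
  (x v : R -> nat -> vec) (y0 : vec)
  (Hscheme : forall eps, 0 < eps -> forall n : nat, (n < NT T dt)%nat ->
     scheme_step E b dt eps (INR n * dt) (x eps n) (v eps n)
       (x eps (S n)) (v eps (S n)))
  (Hbdd : forall n : nat, (1 <= n)%nat -> (n <= NT T dt)%nat ->
     bounded_eps (fun eps => x eps n) /\
     bounded_eps (fun eps => vscal eps (v eps n)))
  (Hx0 : lim_eps0 (fun eps => x eps O) y0)
  (Hv0 : lim_eps0 (fun eps => vscal eps (v eps O)) (0, 0)) :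
  forall n : nat, (n <= NT T dt)%nat ->
    lim_eps0 (fun eps => x eps n) (limit_seq E b dt y0 n).
Proof.
  pose proof alpha_pos as Ha.
  assert (Main: forall n, (n <= NT T dt)%nat -> VL (fun e => x e n) (limit_seq E b dt y0 n) /\ VL (fun e => vscal e (v e n)) (0,0)).
  { induction n as [|n IH]; intros Hn.
    - split; apply lim_to_VL; auto.
    - assert (Hlt: (n < NT T dt)%nat) by lia.
      destruct (IH ltac:(lia)) as [Hx Hw].
      set (tn := INR n * dt).
      assert (Htn : 0 <= tn) by (unfold tn; apply Rmult_le_pos; [apply pos_INR|lra]).
      set (yn := limit_seq E b dt y0 n) in *.
      assert (Hex : forall e, exists U : vec*vec*vec*vec, 0 < e -> clean E b dt e tn (x e n) (v e n) (x e (S n)) (v e (S n)) (fst (fst (fst U))) (snd (fst (fst U))) (snd (fst U)) (snd U)).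
      { intros e. destruct (Rlt_dec 0 e) as [He|He].
        - destruct (clean_of_scheme _ _ _ _ _ _ _ _ _ He (Hscheme e He n Hlt)) as (a1&a2&a3&a4&Hc).
          exists (a1,a2,a3,a4). intros _. exact Hc.
        - exists ((0,0),(0,0),(0,0),(0,0)). intros; lra. }
      set (Uf := fun e => proj1_sig (constructive_indefinite_description _ (Hex e))).
      set (u1 := fun e => fst (fst (fst (Uf e)))).
      set (u2 := fun e => snd (fst (fst (Uf e)))).
      set (u3 := fun e => snd (fst (Uf e))).
      set (u4 := fun e => snd (Uf e)).
      assert (HU : forall e, 0 < e -> clean E b dt e tn (x e n) (v e n) (x e (S n)) (v e (S n)) (u1 e) (u2 e) (u3 e) (u4 e)).
      { intros e He. exact (proj2_sig (constructive_indefinite_description _ (Hex e)) He). }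
      clearbody u1 u2 u3 u4. clear Uf Hex.
      unfold clean in HU; cbv zeta in HU.
      assert (S1 := fun e He => proj1 (HU e He)).
      assert (S2 := fun e He => proj1 (proj2 (HU e He))).
      assert (S3 := fun e He => proj1 (proj2 (proj2 (HU e He)))).
      assert (S4 := fun e He => proj1 (proj2 (proj2 (proj2 (HU e He))))).
      assert (S5 := fun e He => proj1 (proj2 (proj2 (proj2 (proj2 (HU e He)))))).
      assert (S6 := fun e He => proj2 (proj2 (proj2 (proj2 (proj2 (HU e He)))))).
      simpl in S1, S2, S3, S4, S5, S6.
      clear HU.
      assert (Hz : forall a, a = (0,0) -> VL (fun e => vscal e (v e n)) a) by (intros; subst; auto).
      set (U2 := drift E b tn yn).
      set (y2 := vadd yn (vscal dt U2)).
      set (U3 := drift E b (tn+dt) y2).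
      set (y3 := vadd yn (vscal (dt/4) (vadd U2 U3))).
      set (U4 := drift E b (tn + dt/2) y3).
      destruct (stage _ _ _ _ _ (b tn yn) (E tn yn) S1) as [Hu1 HF1].
      { nra. } { apply Hb0; auto. } { exact Hw. } { apply cont_VL; auto. } { apply cont_L; auto. }
      destruct (stage _ _ _ _ _ (b tn yn) (E tn yn) S2) as [Hu2 HF2].
      { nra. } { apply Hb0; auto. }
      { eapply VL_eq; [apply VL_sub; [exact Hw | apply VL_scal; exact HF1]|].
        unfold vsub, vscal; simpl; f_equal; ring. }
      { apply cont_VL; auto. } { apply cont_L; auto. }
      assert (Hxb2 : VL (fun e => vadd (x e n) (vscal dt (u2 e))) y2).
      { apply VL_add; [exact Hx | apply VL_scal; exact Hu2]. }
      destruct (stage _ _ _ _ _ (b (tn+dt) y2) (E (tn+dt) y2) S3) as [Hu3 HF3].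
      { nra. } { apply Hb0; lra. }
      { eapply VL_eq; [apply VL_add; [exact Hw | apply VL_scal; exact HF2]|].
        unfold vadd, vscal; simpl; f_equal; ring. }
      { apply cont_VL; auto; lra. } { apply cont_L; auto; lra. }
      assert (Hxb3 : VL (fun e => vadd (x e n) (vscal (dt/4) (vadd (u2 e) (u3 e)))) y3).
      { apply VL_add; [exact Hx | apply VL_scal; apply VL_add; [exact Hu2 | exact Hu3]]. }
      destruct (stage _ _ _ _ _ (b (tn+dt/2) y3) (E (tn+dt/2) y3) S4) as [Hu4 HF4].
      { nra. } { apply Hb0; lra. }
      { eapply VL_eq; [apply VL_add; [exact Hw | apply VL_scal; apply VL_add; [apply VL_add|]; apply VL_scal; eassumption]|].
        unfold vadd, vscal; simpl; f_equal; ring. }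
      { apply cont_VL; auto; lra. } { apply cont_L; auto; lra. }
      split.
      + eapply VL_ext; [exact S5|].
        change (limit_seq E b dt y0 (S n)) with (vadd yn (vscal (dt/6) (vadd (vadd U2 U3) (vscal 4 U4)))).
        apply VL_add; [exact Hx|]. apply VL_scal. apply VL_add; [apply VL_add; assumption | apply VL_scal; assumption].
      + eapply VL_ext; [exact S6|].
        eapply VL_eq; [apply VL_add; [exact Hw | apply VL_scal; apply VL_add; [apply VL_add|apply VL_scal]; eassumption]|].
        unfold vadd, vscal; simpl; f_equal; ring. }
  intros n Hn. apply VL_to_lim. apply (Main n Hn).
Qed.
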